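(* Let $G$ be a finite irreducible ordered graph, and suppose that $G$ has at most one (up to order-isomorphism) irreducible induced ordered subgraph of order $3$, and at most one of order $4$. Then $G \in \mathcal{J}$.
   Context: Ordered graphs of order $n$ have vertex set $[n]$ with the natural order. A pair of vertices $u<v$ separates the edges of $G$ if every edge $ij$ ($i<j$) has $j\leqslant u$ or $v\leqslant i$; $G$ is irreducible if no pair separates its edges. For $n\in\mathbb{N}$: $J^{(n)}_1=K_n$; $J^{(n)}_2$ on $[n]$ with edge set $\{1n\}$ if $n\geqslant2$ (empty if $n=1$); $J^{(n)}_3$ on $[n]$ with edges $\{1i: 2\leqslant i\leqslant n\}$; $J^{(n)}_4$ on $[n]$ with edges $\{in: 1\leqslant i\leqslant n-1\}$; $L^{(n)}$ on $[n]$ with edges $\{i(i+1): 1\leqslant i\leqslant n-1\}$; $Q_1$ on $[4]$ with edges $\{13,24\}$; $Q_2$ on $[4]$ with edges $\{14,23\}$. $\mathcal{J}$ is the set of all ordered graphs $J^{(n)}_i$ ($i\in[4]$, $n\in\mathbb{N}$), $L^{(n)}$ ($n\in\mathbb{N}$), $Q_1$ and $Q_2$. *)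

(* Defs.v *)
(* Ordered graphs of order n: vertex set 'I_n = {0,...,n-1}
   (0-based version of [n] with its natural order), edges given by a
   symmetric irreflexive boolean relation. *)
From mathcomp Require Import all_boot.
Set Implicit Arguments. Unset Strict Implicit. Unset Printing Implicit Defensive.

Definition ograph (n : nat) (e : rel 'I_n) : Prop := symmetric e /\ irreflexive e.

Definition separates (n : nat) (e : rel 'I_n) (u v : 'I_n) : Prop :=
  forall i j : 'I_n, i < j -> e i j -> (j <= u) || (v <= i).

Definition irreducible (n : nat) (e : rel 'I_n) : Prop :=
  ~ exists u v : 'I_n, u < v /\ separates e u v.

Definition ord_iso (m k : nat) (e1 : rel 'I_m) (e2 : rel 'I_k) : Prop :=
  exists h : 'I_m -> 'I_k,
    [/\ bijective h,
        (forall x y : 'I_m, (h x < h y) = (x < y)) &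
        (forall x y : 'I_m, e2 (h x) (h y) = e1 x y)].

Definition strict_incr (k n : nat) (f : 'I_k -> 'I_n) : Prop :=
  forall i j : 'I_k, i < j -> f i < f j.

Definition induced (k n : nat) (e : rel 'I_n) (f : 'I_k -> 'I_n) : rel 'I_k :=
  fun i j => e (f i) (f j).

Definition at_most_one_irred (n : nat) (e : rel 'I_n) (k : nat) : Prop :=
  forall f g : 'I_k -> 'I_n, strict_incr f -> strict_incr g ->
    irreducible (induced e f) -> irreducible (induced e g) ->
    ord_iso (induced e f) (induced e g).

(* The graphs of the family J, on vertex set {0,...,n-1} (0-based) *)
Definition J1 (n i j : nat) : bool := i != j.
Definition J2 (n i j : nat) : bool :=
  (i != j) && (((i == 0) && (j == n.-1)) || ((j == 0) && (i == n.-1))).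
Definition J3 (n i j : nat) : bool :=
  ((i == 0) && (j != 0)) || ((j == 0) && (i != 0)).
Definition J4 (n i j : nat) : bool :=
  ((i == n.-1) && (j != n.-1)) || ((j == n.-1) && (i != n.-1)).
Definition Lg (n i j : nat) : bool := (i == j.+1) || (j == i.+1).
Definition Q1 (i j : nat) : bool :=
  [|| (i == 0) && (j == 2), (i == 2) && (j == 0),
      (i == 1) && (j == 3) | (i == 3) && (j == 1)].
Definition Q2 (i j : nat) : bool :=
  [|| (i == 0) && (j == 3), (i == 3) && (j == 0),
      (i == 1) && (j == 2) | (i == 2) && (j == 1)].

Definition same_graph (n : nat) (e : rel 'I_n) (r : nat -> nat -> bool) : Prop :=
  forall i j : 'I_n, e i j = r i j.

(* G belongs to the family J (ordered graphs on [n] are equal iff they have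
   the same edges) *)
Definition in_J (n : nat) (e : rel 'I_n) : Prop :=
  same_graph e (J1 n) \/ same_graph e (J2 n) \/ same_graph e (J3 n) \/
  same_graph e (J4 n) \/ same_graph e (Lg n) \/
  (n = 4 /\ same_graph e Q1) \/ (n = 4 /\ same_graph e Q2).

(* Main.v *)
Require Import Defs.
From mathcomp Require Import all_boot.
From mathcomp Require Import zify.
From Stdlib Require Import Classical.
Set Implicit Arguments. Unset Strict Implicit. Unset Printing Implicit Defensive.

Definition irr3 (E : nat -> nat -> bool) a b c := (E a b || E a c) && (E a c || E b c).
Definition irr4 (E : nat -> nat -> bool) a b c d :=
  [&& (E a b || E a c || E a d), (E a c || E a d || E b c || E b d) & (E a d || E b d || E c d)].
Definition sameN m (E : nat -> nat -> bool) (R : nat -> nat -> bool) :=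
  forall x y, x <= m -> y <= m -> E x y = R x y.

Lemma sym_suff m E R : (forall x y, E x y = E y x) -> (forall x, E x x = false) ->
  (forall x y, R x y = R y x) -> (forall x, R x x = false) ->
  (forall x y, x < y -> y <= m -> E x y = R x y) -> sameN m E R.
Proof.
move=> sE iE sR iR h x y xm ym. case: (ltngtP x y) => [xy|yx|->].
- exact: h. - rewrite sE sR; exact: h. - by rewrite iE iR.
Qed.

Section Cases.
Variables (m : nat) (E : nat -> nat -> bool).
Hypothesis sym : forall x y, E x y = E y x.
Hypothesis irf : forall x, E x x = false.
Hypothesis cut : forall u, u < m -> exists i j, [/\ i <= u, u < j, j <= m & E i j].

Lemma caseK (P : forall a b c, a < b -> b < c -> c <= m -> irr3 E a b c ->
   [/\ E a b = true, E a c = true & E b c = true]) : sameN m E (J1 m.+1).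
Proof.
have Lc : forall a b c, a <= b -> b < c -> c <= m -> E a c -> E b c.
  move=> a b c ab bc cm h. rewrite leq_eqVlt in ab. case/orP: ab => [/eqP <- //|ab].
  have h3 : irr3 E a b c by rewrite /irr3 h !orbT.
  by case: (P a b c ab bc cm h3).
have Ld : forall a b c, a < b -> b <= c -> c <= m -> E a c -> E a b.
  move=> a b c ab bc cm h. rewrite leq_eqVlt in bc. case/orP: bc => [/eqP -> //|bc].
  have h3 : irr3 E a b c by rewrite /irr3 h !orbT.
  by case: (P a b c ab bc cm h3).
have cons : forall x, x < m -> E x x.+1.
  move=> x xm. have [i [j [ix xj jm eij]]] := cut xm.
  have exj := Lc i x j ix xj jm eij.
  exact: (Ld x x.+1 j (ltnSn x) xj jm exj).
have All : forall d x, x + d.+1 <= m -> E x (x + d.+1).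
  elim=> [|d IH] x h. rewrite addn1; apply: cons; lia.
  have h1 := cons x (ltac:(lia)).
  have h2 : E x.+1 (x + d.+2).
    have -> : x + d.+2 = x.+1 + d.+1 by lia. apply: IH; lia.
  have h3 : irr3 E x x.+1 (x + d.+2) by rewrite /irr3 h1 h2 !orbT.
  by case: (P x x.+1 (x + d.+2) (ltnSn x) (ltac:(lia)) h h3).
apply: sym_suff => //.
- by move=> x y; rewrite /J1 eq_sym.
- by move=> x; rewrite /J1 eqxx.
move=> x y xy ym. have -> : y = x + (y - x).-1.+1 by lia.
rewrite All; last by lia. rewrite /J1; apply/esym/eqP; lia.
Qed.

Lemma caseL (P : forall a b c, a < b -> b < c -> c <= m -> irr3 E a b c ->
   [/\ E a b = true, E a c = false & E b c = true]) : sameN m E (Lg m.+1).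
Proof.
have noLong : forall a c, a.+1 < c -> c <= m -> E a c = false.
  move=> a c ac cm. apply/negbTE/negP => h.
  have h3 : irr3 E a a.+1 c by rewrite /irr3 h !orbT.
  case: (P a a.+1 c (ltnSn a) ac cm h3) => _ h2 _. by rewrite h in h2.
have cons : forall x, x < m -> E x x.+1.
  move=> x xm. have [i [j [ix xj jm eij]]] := cut xm.
  case: (ltnP i.+1 j) => hij. by rewrite noLong in eij.
  have ei : i = x by lia. have ej : j = x.+1 by lia. by subst.
apply: sym_suff => //.
- by move=> x y; rewrite /Lg orbC.
- by move=> x; rewrite /Lg; apply/norP; split; apply/eqP; lia.
move=> x y xy ym. have [->|hxy] : y = x.+1 \/ x.+1 < y by lia.
- rewrite cons; last by lia. by rewrite /Lg eqxx orbT.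
- rewrite noLong //. apply/esym/norP; split; apply/eqP; lia.
Qed.

Lemma caseJ3 (P : forall a b c, a < b -> b < c -> c <= m -> irr3 E a b c ->
   [/\ E a b = true, E a c = true & E b c = false]) : sameN m E (J3 m.+1).
Proof.
have noE : forall x y, 0 < x -> x < y -> y <= m -> E x y = false.
  move=> x y x0 xy ym. apply/negbTE/negP => hxy.
  have hix : forall i, i < x -> E i x = false.
    move=> i ix; apply/negbTE/negP => h.
    have h3 : irr3 E i x y by rewrite /irr3 h hxy !orbT.
    case: (P i x y ix xy ym h3) => _ _ h4. by rewrite hxy in h4.
  have [i [j [iu uj jm eij]]] := cut (ltac:(lia) : x.-1 < m).
  have [ej|xj] : j = x \/ x < j by lia.
  - subst j. by rewrite hix in eij; last lia.
  - have h3 : irr3 E i x j by rewrite /irr3 eij !orbT.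
    case: (P i x j (ltac:(lia)) xj jm h3) => h4 _ _. rewrite hix in h4 => //. lia.
have E0 : forall y, 0 < y -> y <= m -> E 0 y.
  move=> y y0 ym. have [i [j [iu uj jm eij]]] := cut (ltac:(lia) : y.-1 < m).
  have [i0|i0] : i = 0 \/ 0 < i by lia.
  - subst i. have [ej|yj] : j = y \/ y < j by lia. by subst j.
    have h3 : irr3 E 0 y j by rewrite /irr3 eij !orbT.
    by case: (P 0 y j y0 yj jm h3).
  - by rewrite noE in eij; lia.
apply: sym_suff => //.
- by move=> x y; rewrite /J3 orbC.
- by move=> x; rewrite /J3; case: (x == 0).
move=> x y xy ym. have [->|x0] : x = 0 \/ 0 < x by lia.
- rewrite E0 //; last lia. rewrite /J3 eqxx /=. apply/esym/eqP; lia.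
- rewrite noE //. rewrite /J3. apply/esym/norP; split; apply/nandP; left; apply/eqP; lia.
Qed.

Lemma caseJ4 (P : forall a b c, a < b -> b < c -> c <= m -> irr3 E a b c ->
   [/\ E a b = false, E a c = true & E b c = true]) : sameN m E (J4 m.+1).
Proof.
have noE : forall x y, x < y -> y < m -> E x y = false.
  move=> x y xy ym. apply/negbTE/negP => hxy.
  have hyz : forall z, y < z -> z <= m -> E y z = false.
    move=> z yz zm; apply/negbTE/negP => h.
    have h3 : irr3 E x y z by rewrite /irr3 h hxy !orbT.
    case: (P x y z xy yz zm h3) => h4 _ _. by rewrite hxy in h4.
  have [i [j [iu uj jm eij]]] := cut ym.
  have [ei|iy] : i = y \/ i < y by lia.
  - subst i. by rewrite hyz in eij.
  - have h3 : irr3 E i y j by rewrite /irr3 eij !orbT.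
    case: (P i y j iy uj jm h3) => _ _ h4. by rewrite hyz in h4.
have Em : forall x, x < m -> E x m.
  move=> x xm. have [i [j [iu uj jm eij]]] := cut xm.
  have [jm'|ej] : j < m \/ j = m by lia.
  - by rewrite noE in eij; lia.
  subst j. have [ei|ix] : i = x \/ i < x by lia. by subst i.
  have h3 : irr3 E i x m by rewrite /irr3 eij !orbT.
  by case: (P i x m ix xm (leqnn m) h3).
apply: sym_suff => //.
- by move=> x y; rewrite /J4 orbC.
- by move=> x; rewrite /J4; case: (x == m.+1.-1).
move=> x y xy ym. rewrite /J4 /=. have [->|ym'] : y = m \/ y < m by lia.
- rewrite Em; last lia. have -> : (x == m) = false by apply/eqP; lia. by rewrite eqxx.
- rewrite noE //. apply/esym/norP; split; apply/nandP; left; apply/eqP; lia.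
Qed.


Lemma caseJ2 (P : forall a b c, a < b -> b < c -> c <= m -> irr3 E a b c ->
   [/\ E a b = false, E a c = true & E b c = false])
  (H4 : forall a b c d a' b' c' d', a < b -> b < c -> c < d -> d <= m ->
     a' < b' -> b' < c' -> c' < d' -> d' <= m -> irr4 E a b c d -> irr4 E a' b' c' d' ->
     [/\ E a b = E a' b', E a c = E a' c', E a d = E a' d', E b c = E b' c'
         & E b d = E b' d' /\ E c d = E c' d'])
  (m2 : 1 < m) :
  sameN m E (J2 m.+1) \/ (m.+1 = 4 /\ sameN m E Q1) \/ (m.+1 = 4 /\ sameN m E Q2).
Proof.
have A : forall a b c, a < b -> b < c -> c <= m -> E a b -> E b c -> False.
  move=> a b c ab bc cm h1 h2.
  have h3 : irr3 E a b c by rewrite /irr3 h1 h2 !orbT.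
  case: (P a b c ab bc cm h3) => h4 _ _. by rewrite h1 in h4.
have B1 : forall a b c, a < b -> b < c -> c <= m -> E a c -> E a b = false.
  move=> a b c ab bc cm h.
  have h3 : irr3 E a b c by rewrite /irr3 h !orbT.
  by case: (P a b c ab bc cm h3).
have B2 : forall a b c, a < b -> b < c -> c <= m -> E a c -> E b c = false.
  move=> a b c ab bc cm h.
  have h3 : irr3 E a b c by rewrite /irr3 h !orbT.
  by case: (P a b c ab bc cm h3).
have Q1s : forall x y, Q1 x y = Q1 y x.
  by move=> x y; rewrite /Q1; case: (x == 0); case: (x == 1); case: (x == 2); case: (x == 3);
    case: (y == 0); case: (y == 1); case: (y == 2); case: (y == 3).
have Q2s : forall x y, Q2 x y = Q2 y x.
  by move=> x y; rewrite /Q2; case: (x == 0); case: (x == 1); case: (x == 2); case: (x == 3);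
    case: (y == 0); case: (y == 1); case: (y == 2); case: (y == 3).
have Q1i : forall x, Q1 x x = false.
  by case=> [|[|[|[|x]]]].
have Q2i : forall x, Q2 x x = false.
  by case=> [|[|[|[|x]]]].
case h0m : (E 0 m).
- have [[x [y [x0 xy ym hxy]]]|nex] :=
      classic (exists x y, [/\ 0 < x, x < y, y < m & E x y]).
  + have i1 : irr4 E 0 x y m by rewrite /irr4 h0m ?orbT ?orTb.
    have [m3|m4] : m = 3 \/ 3 < m by lia.
    * subst m. have ex : x = 1 by lia. have ey : y = 2 by lia. subst x y.
      right; right; split=> //.
      have f01 := B1 0 1 3 isT isT isT h0m.
      have f02 := B1 0 2 3 isT isT isT h0m.
      have f13 := B2 0 1 3 isT isT isT h0m.
      have f23 := B2 0 2 3 isT isT isT h0m.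
      apply: sym_suff => // x y.
      case: x => [|[|[|[|x]]]]; case: y => [|[|[|[|y]]]] //=; try (by move=> *; lia).
    * have [u [v [u0 uv vm huv]]] : exists u v, [/\ 0 < u, u < v, v < m & E u v = false].
        have [x1|x1] : x = 1 \/ 1 < x by lia.
        - subst x. have [y2|y2] : y = 2 \/ 2 < y by lia.
          + subst y. exists 2, 3; split=> //. apply/negbTE/negP => h. exact: (A 1 2 3 isT isT (ltnW m4) hxy h).
          + exists 1, 2; split=> //; first lia. exact: (B1 1 2 y isT y2 (ltnW ym) hxy).
        - exists 1, x; split=> //; try lia. apply/negbTE/negP => h. exact: (A 1 x y x1 xy (ltnW ym) h hxy).
      have i2 : irr4 E 0 u v m by rewrite /irr4 h0m ?orbT ?orTb.
      case: (H4 0 x y m 0 u v m x0 xy ym (leqnn m) u0 uv vm (leqnn m) i1 i2) => _ _ _ h _.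
      by rewrite hxy huv in h.
  + left. apply: sym_suff => //.
    * by move=> x y; rewrite /J2 eq_sym orbC.
    * by move=> x; rewrite /J2 eqxx.
    move=> x y xy ym. rewrite /J2 /=.
    have -> : (x != y) = true by apply/eqP; lia.
    have -> : (y == 0) = false by apply/eqP; lia.
    rewrite andFb orbF /=.
    have [x0|x0] : x = 0 \/ 0 < x by lia.
    * subst x. rewrite eqxx /=. have [ey|ey] : y = m \/ y < m by lia.
      - by subst y; rewrite h0m eqxx.
      - rewrite (B1 0 y m) //. apply/esym/eqP; lia.
    * have -> : (x == 0) = false by apply/eqP; lia.
      have [ey|ey] : y = m \/ y < m by lia.
      - subst y. by rewrite (B2 0 x m).
      - apply/negbTE/negP => h. apply: nex. by exists x, y.
- right; left.
  have s1 : E 0 1 = false.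
    apply/negbTE/negP => h. have [i [j [iu uj jm eij]]] := cut m2.
    have [i0|i1] : i = 0 \/ i = 1 by lia.
    + subst i. by rewrite (B1 0 1 j) in h.
    + subst i. exact: (A 0 1 j).
  have [i [j [iu uj jm eij]]] := cut (ltac:(lia) : 0 < m).
  have i0 : i = 0 by lia. subst i.
  have j2 : 2 <= j. have [j1|] : j = 1 \/ 2 <= j by lia. by subst j; rewrite s1 in eij. done.
  have jm' : j < m. have [ej|] : j = m \/ j < m by lia. by subst j; rewrite h0m in eij. done.
  have [p [q [pu uq qm epq]]] := cut jm'.
  have p0 : 0 < p.
    have [ep|] : p = 0 \/ 0 < p by lia. subst p. by rewrite (B1 0 j q) in eij. done.
  have pj : p < j.
    have [ep|] : p = j \/ p < j by lia. subst p. exfalso; exact: (A 0 j q). done.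
  have f0q : E 0 q = false.
    apply/negbTE/negP => h. by rewrite (B1 0 j q) in eij.
  have i1 : irr4 E 0 p j q by rewrite /irr4 eij epq ?orbT ?orTb.
  have ej : j = 2.
    have [|j3] : j = 2 \/ 3 <= j by lia. done.
    have i2 : irr4 E 0 1 2 j by rewrite /irr4 eij ?orbT ?orTb.
    case: (H4 0 p j q 0 1 2 j p0 pj uq qm isT isT j3 jm i1 i2) => _ _ h _ _.
    by rewrite f0q eij in h.
  subst j. have ep : p = 1 by lia. subst p.
  have eq3 : q = 3.
    have [|q4] : q = 3 \/ 4 <= q by lia. done.
    have i2 : irr4 E 1 2 3 q by rewrite /irr4 epq ?orbT ?orTb.
    case: (H4 0 1 2 q 1 2 3 q isT isT uq qm isT isT q4 qm i1 i2) => _ _ h _ _.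
    by rewrite f0q epq in h.
  subst q.
  have em : m = 3.
    have [|m4] : m = 3 \/ 3 < m by lia. done.
    have [i [k [iu3 uk km eik]]] := cut m4.
    move: eik; have [->|[->|[->|->]]] : i = 0 \/ i = 1 \/ i = 2 \/ i = 3 by lia.
    + move=> eik; by rewrite (B1 0 2 k isT (ltac:(lia)) km eik) in eij.
    + move=> eik; by rewrite (B1 1 3 k isT (ltac:(lia)) km eik) in epq.
    + move=> eik; exfalso; exact: (A 0 2 k isT (ltac:(lia)) km eij eik).
    + move=> eik; exfalso; exact: (A 1 3 k isT (ltac:(lia)) km epq eik).
  subst m. split=> //.
  have f12 := B2 0 1 2 isT isT isT eij.
  have f23 := B2 1 2 3 isT isT isT epq.
  apply: sym_suff => // x y.
  case: x => [|[|[|[|x]]]]; case: y => [|[|[|[|y]]]] //=; try (by move=> *; lia).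
Qed.

End Cases.

Definition in_JN m (E : nat -> nat -> bool) :=
  sameN m E (J1 m.+1) \/ sameN m E (J2 m.+1) \/ sameN m E (J3 m.+1) \/
  sameN m E (J4 m.+1) \/ sameN m E (Lg m.+1) \/
  (m.+1 = 4 /\ sameN m E Q1) \/ (m.+1 = 4 /\ sameN m E Q2).

Lemma core m (E : nat -> nat -> bool)
  (sym : forall x y, E x y = E y x) (irf : forall x, E x x = false)
  (cut : forall u, u < m -> exists i j, [/\ i <= u, u < j, j <= m & E i j])
  (H3 : forall a b c a' b' c', a < b -> b < c -> c <= m -> a' < b' -> b' < c' -> c' <= m ->
     irr3 E a b c -> irr3 E a' b' c' ->
     [/\ E a b = E a' b', E a c = E a' c' & E b c = E b' c'])
  (H4 : forall a b c d a' b' c' d', a < b -> b < c -> c < d -> d <= m ->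
     a' < b' -> b' < c' -> c' < d' -> d' <= m -> irr4 E a b c d -> irr4 E a' b' c' d' ->
     [/\ E a b = E a' b', E a c = E a' c', E a d = E a' d', E b c = E b' c'
         & E b d = E b' d' /\ E c d = E c' d']) :
  in_JN m E.
Proof.
have [m0|[m1|m2]] : m = 0 \/ m = 1 \/ 1 < m by lia.
- subst m. left. apply: sym_suff => //.
  + by move=> x y; rewrite /J1 eq_sym.
  + by move=> x; rewrite /J1 eqxx.
  + move=> x y; lia.
- subst m. left. apply: sym_suff => //.
  + by move=> x y; rewrite /J1 eq_sym.
  + by move=> x; rewrite /J1 eqxx.
  + move=> x y xy y1. have ex : x = 0 by lia. have ey : y = 1 by lia. subst x y.
    have [i [j [iu uj jm eij]]] := cut 0 isT.
    have ei : i = 0 by lia. have ej : j = 1 by lia. subst i j. by rewrite eij.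
have [c0 [c1 cm hc]] : exists c, [/\ 1 < c, c <= m & irr3 E 0 1 c].
  have [i [j [iu uj jm eij]]] := cut 0 (ltac:(lia)).
  have ei : i = 0 by lia. subst i.
  have [ej|j2] : j = 1 \/ 1 < j by lia.
  - subst j. have [i [k [iu' uk km eik]]] := cut 1 m2.
    move: eik; have [->|->] : i = 0 \/ i = 1 by lia.
    + move=> eik; exists k; split=> //. by rewrite /irr3 eik !orbT.
    + move=> eik; exists k; split=> //. by rewrite /irr3 eij eik !orbT.
  - exists j; split=> //. by rewrite /irr3 eij !orbT.
have P : forall a b c, a < b -> b < c -> c <= m -> irr3 E a b c ->
    [/\ E a b = E 0 1, E a c = E 0 c0 & E b c = E 1 c0].
  move=> a b c ab bc cmm h. exact: (H3 a b c 0 1 c0 ab bc cmm isT c1 cm h hc).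
move: P hc; rewrite /irr3; case: (E 0 1); case: (E 0 c0); case: (E 1 c0) => //= P _.
- left. exact: caseK.
- right; right; left. exact: caseJ3.
- right; right; right; right; left. exact: caseL.
- right; right; right; left. exact: caseJ4.
- case: (caseJ2 sym irf cut P H4 m2) => [h|[h|h]].
  + right; left; exact: h.
  + right; right; right; right; right; left; exact: h.
  + right; right; right; right; right; right; exact: h.
Qed.

Lemma incr_ge k (g : 'I_k -> 'I_k) : (forall x y : 'I_k, x < y -> g x < g y) -> forall x : 'I_k, x <= g x.
Proof.
move=> hg [x hx]; elim: x hx => [|x IH] hx //=.
have hx' : x < k by apply: ltnW.
have h1 := IH hx'. have h2 := hg (Ordinal hx') (Ordinal hx) (ltnSn x).
simpl in h1, h2. exact: (leq_ltn_trans h1 h2).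
Qed.

Lemma iso_id k (h : 'I_k -> 'I_k) : bijective h -> (forall x y : 'I_k, (h x < h y) = (x < y)) ->
  forall x : 'I_k, h x = x.
Proof.
case=> g hK Kh hm x.
have hg : forall x y : 'I_k, x < y -> g x < g y.
  move=> u v uv. by rewrite -hm !Kh.
have hh : forall x y : 'I_k, x < y -> h x < h y by move=> u v uv; rewrite hm.
apply/val_inj/eqP. rewrite eqn_leq; apply/andP; split.
- have := incr_ge hg (h x). by rewrite hK.
- exact: incr_ge hh x.
Qed.

Lemma iso_same k (r1 r2 : rel 'I_k) : ord_iso r1 r2 -> forall x y, r2 x y = r1 x y.
Proof.
move=> [h [hb hm he]] x y. have hid := iso_id hb hm. by rewrite -he !hid.
Qed.

Lemma irr_cuts k (r : rel 'I_k) :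
  (forall u : 'I_k, u.+1 < k -> exists i j : 'I_k, [/\ i <= u, u < j & r i j]) -> irreducible r.
Proof.
move=> h [u [v [uv sep]]].
have [i [j [iu uj rij]]] := h u (leq_ltn_trans uv (ltn_ord v)).
have := sep i j (leq_ltn_trans iu uj) rij. case/orP => h'; lia.
Qed.

Theorem lemma18 (n : nat) (e : rel 'I_n) :
  ograph e -> irreducible e ->
  at_most_one_irred e 3 -> at_most_one_irred e 4 ->
  in_J e.
Proof.
case: n e => [|m] e [esym eirr] ir H3 H4.
  left => i; by case: i.
pose E := fun x y => e (inord x) (inord y).
have eE : forall i j : 'I_m.+1, e i j = E i j by move=> i j; rewrite /E !inord_val.
have sym : forall x y, E x y = E y x by move=> x y; exact: esym.
have irf : forall x, E x x = false by move=> x; exact: eirr.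
have cut : forall u, u < m -> exists i j, [/\ i <= u, u < j, j <= m & E i j].
  move=> u um. apply: NNPP => hne. apply: ir.
  exists (inord u), (inord u.+1). rewrite /separates !inordK //; try lia.
  split=> // i j hij eij.
  case: (leqP j u) => //= hju. case: (leqP u.+1 i) => //= hiu.
  exfalso; apply: hne. exists i, j. split=> //; first by rewrite -ltnS (ltn_ord j).
  by rewrite -eE.
pose fk k (s : seq nat) := fun i : 'I_k => (inord (nth 0 s i) : 'I_m.+1).
have H3' : forall a b c a' b' c', a < b -> b < c -> c <= m -> a' < b' -> b' < c' -> c' <= m ->
     irr3 E a b c -> irr3 E a' b' c' ->
     [/\ E a b = E a' b', E a c = E a' c' & E b c = E b' c'].
  have st : forall a b c, a < b -> b < c -> c <= m -> strict_incr (fk 3 [:: a; b; c]).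
    move=> a b c ab bc cm [[|[|[|i]]] hi] [[|[|[|j]]] hj] //= hij;
      rewrite /fk /= !inordK //; lia.
  have ir3 : forall a b c, a < b -> b < c -> c <= m -> irr3 E a b c ->
      irreducible (induced e (fk 3 [:: a; b; c])).
    move=> a b c ab bc cm /andP [h1 h2]. apply: irr_cuts.
    move=> [[|[|u]] hu] //= hu'.
    - case/orP: h1 => h.
      + by exists (@Ordinal 3 0 isT), (@Ordinal 3 1 isT).
      + by exists (@Ordinal 3 0 isT), (@Ordinal 3 2 isT).
    - case/orP: h2 => h.
      + by exists (@Ordinal 3 0 isT), (@Ordinal 3 2 isT).
      + by exists (@Ordinal 3 1 isT), (@Ordinal 3 2 isT).
  move=> a b c a' b' c' ab bc cm ab' bc' cm' i1 i2.
  have := iso_same (H3 _ _ (st a b c ab bc cm) (st a' b' c' ab' bc' cm')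
                         (ir3 a b c ab bc cm i1) (ir3 a' b' c' ab' bc' cm' i2)).
  move=> hs.
  have := hs (@Ordinal 3 0 isT) (@Ordinal 3 1 isT).
  have := hs (@Ordinal 3 0 isT) (@Ordinal 3 2 isT).
  have := hs (@Ordinal 3 1 isT) (@Ordinal 3 2 isT).
  rewrite /induced /fk /= => h1 h2 h3. by split.
have H4' : forall a b c d a' b' c' d', a < b -> b < c -> c < d -> d <= m ->
     a' < b' -> b' < c' -> c' < d' -> d' <= m -> irr4 E a b c d -> irr4 E a' b' c' d' ->
     [/\ E a b = E a' b', E a c = E a' c', E a d = E a' d', E b c = E b' c'
         & E b d = E b' d' /\ E c d = E c' d'].
  have st : forall a b c d, a < b -> b < c -> c < d -> d <= m -> strict_incr (fk 4 [:: a; b; c; d]).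
    move=> a b c d ab bc cd dm [[|[|[|[|i]]]] hi] [[|[|[|[|j]]]] hj] //= hij;
      rewrite /fk /= !inordK //; lia.
  have ir4 : forall a b c d, a < b -> b < c -> c < d -> d <= m -> irr4 E a b c d ->
      irreducible (induced e (fk 4 [:: a; b; c; d])).
    move=> a b c d ab bc cd dm /and3P [h1 h2 h3]. apply: irr_cuts.
    move=> [[|[|[|u]]] hu] //= hu'.
    - case/orP: h1 => [/orP [h|h]|h].
      + by exists (@Ordinal 4 0 isT), (@Ordinal 4 1 isT).
      + by exists (@Ordinal 4 0 isT), (@Ordinal 4 2 isT).
      + by exists (@Ordinal 4 0 isT), (@Ordinal 4 3 isT).
    - case/orP: h2 => [/orP [/orP [h|h]|h]|h].
      + by exists (@Ordinal 4 0 isT), (@Ordinal 4 2 isT).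
      + by exists (@Ordinal 4 0 isT), (@Ordinal 4 3 isT).
      + by exists (@Ordinal 4 1 isT), (@Ordinal 4 2 isT).
      + by exists (@Ordinal 4 1 isT), (@Ordinal 4 3 isT).
    - case/orP: h3 => [/orP [h|h]|h].
      + by exists (@Ordinal 4 0 isT), (@Ordinal 4 3 isT).
      + by exists (@Ordinal 4 1 isT), (@Ordinal 4 3 isT).
      + by exists (@Ordinal 4 2 isT), (@Ordinal 4 3 isT).
  move=> a b c d a' b' c' d' ab bc cd dm ab' bc' cd' dm' i1 i2.
  have := iso_same (H4 _ _ (st a b c d ab bc cd dm) (st a' b' c' d' ab' bc' cd' dm')
                         (ir4 a b c d ab bc cd dm i1) (ir4 a' b' c' d' ab' bc' cd' dm' i2)).
  move=> hs.
  have := hs (@Ordinal 4 0 isT) (@Ordinal 4 1 isT).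
  have := hs (@Ordinal 4 0 isT) (@Ordinal 4 2 isT).
  have := hs (@Ordinal 4 0 isT) (@Ordinal 4 3 isT).
  have := hs (@Ordinal 4 1 isT) (@Ordinal 4 2 isT).
  have := hs (@Ordinal 4 1 isT) (@Ordinal 4 3 isT).
  have := hs (@Ordinal 4 2 isT) (@Ordinal 4 3 isT).
  rewrite /induced /fk /= => h1 h2 h3 h4 h5 h6. by split.
have conv : forall R, sameN m E R -> same_graph e R.
  move=> R h i j. rewrite eE. apply: h; by rewrite -ltnS (ltn_ord _).
case: (core sym irf cut H3' H4') => [h|[h|[h|[h|[h|[[h1 h]|[h1 h]]]]]]].
- left; exact: conv.
- right; left; exact: conv.
- right; right; left; exact: conv.
- right; right; right; left; exact: conv.
- right; right; right; right; left; exact: conv.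
- right; right; right; right; right; left; split; [exact: h1| exact: conv].
- right; right; right; right; right; right; split; [exact: h1| exact: conv].
Qed.
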